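(* Let $j\ge2$, let $H$ be a graph, and let $G\cong\mathsf{TS}_j(H)$ with $q=\omega(G)\ge j+2$. Suppose every vertex of $G$ lies in exactly $t$ maximum cliques of $G$ (cliques of size $q$). Then $j$ divides $t$.
   Context: All graphs are finite, simple, undirected; $\omega(G)$ is the clique number. A $k$-clique of a graph $H$ is a set of $k$ pairwise adjacent vertices. For a graph $H$ and integer $k\ge1$, the Token Sliding graph $\mathsf{TS}_k(H)$ has as vertices the $k$-cliques of $H$, and two $k$-cliques $A,B$ are adjacent iff $A\setminus B=\{u\}$, $B\setminus A=\{v\}$ for some vertices $u,v$ with $uv\in E(H)$. *)

(* Defs.v *)
From mathcomp Require Import all_boot.
Set Implicit Arguments. Unset Strict Implicit. Unset Printing Implicit Defensive.

Section Defs.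
Variable T : finType.
Implicit Types (e : rel T) (S : {set T}).

Definition simple_graph e := symmetric e /\ irreflexive e.

Definition is_clique e S : bool :=
  [forall x in S, forall y in S, (x != y) ==> e x y].

Definition is_kclique e k S : bool := is_clique e S && (#|S| == k).

Definition clique_number e : nat := \max_(S : {set T} | is_clique e S) #|S|.

Definition max_cliques_at e v : {set {set T}} :=
  [set S : {set T} | is_kclique e (clique_number e) S & v \in S].
End Defs.

Definition TS_vertex (V : finType) (eH : rel V) (k : nat) :=
  {A : {set V} | is_kclique eH k A}.

Definition ts_adj (V : finType) (eH : rel V) (A B : {set V}) : bool :=
  [exists u : V, exists v : V,
     [&& A :\: B == [set u], B :\: A == [set v] & eH u v]].

Definition iso_to_TS (T V : finType) (eG : rel T) (eH : rel V) (k : nat) : Prop :=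
  exists f : T -> TS_vertex eH k,
    bijective f /\ forall x y, eG x y = ts_adj eH (val (f x)) (val (f y)).

(* Main.v *)
Require Import Defs.
From mathcomp Require Import all_boot.
From mathcomp Require Import zify.
Set Implicit Arguments. Unset Strict Implicit. Unset Printing Implicit Defensive.

Section Gen.
Variable T : finType.
Lemma cliqueP (e : rel T) (U : {set T}) x y : is_clique e U -> x \in U -> y \in U -> x != y -> e x y.
Proof.
move=> /forallP/(_ x)/implyP cU xU yU; move: (cU xU) => /forallP/(_ y)/implyP/(_ yU)/implyP; exact.
Qed.

Lemma clique_sub (e : rel T) (U X : {set T}) : is_clique e U -> X \subset U -> is_clique e X.
Proof.
move=> cU sXU; apply/forallP=> x; apply/implyP=> xX.
apply/forallP=> y; apply/implyP=> yX; apply/implyP=> nxy.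
by apply: (cliqueP cU) => //; apply: (subsetP sXU).
Qed.

Lemma one_set (K X : {set T}) u : K \subset X -> #|X| = #|K|.+1 -> u \in X -> u \notin K -> X = u |: K.
Proof.
move=> sKX cX uX uK; apply/esym/eqP; rewrite eqEcard subUset sub1set uX sKX cardsU1 uK cX.
by rewrite add1n ltnSn. Qed.

Lemma ex_one (K X : {set T}) : K \subset X -> #|X| = #|K|.+1 -> exists2 u, u \notin K & X = u |: K.
Proof.
move=> sKX cX.
have : #|X :\: K| = 1 by rewrite cardsD (setIidPr sKX) cX subSnn.
move/eqP/cards1P => [u hu].
have := set11 u; rewrite -hu inE => /andP[uK uX].
by exists u => //; apply: one_set.
Qed.

Lemma adj_one (e : rel T) (K : {set T}) u u' : u \notin K -> u' \notin K -> u != u' -> e u u' ->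
  ts_adj e (u |: K) (u' |: K).
Proof.
move=> uK u'K neq E; apply/existsP; exists u; apply/existsP; exists u'; rewrite E andbT.
apply/andP; split; apply/eqP/setP=> z; rewrite !inE.
- case: (z =P u) => [->|nzu]; first by rewrite (negPf uK) (negPf neq).
  by case: (z \in K); rewrite ?orbT ?andbF //= andbF.
- case: (z =P u') => [->|nzu]; first by rewrite (negPf u'K) eq_sym (negPf neq).
  by case: (z \in K); rewrite ?orbT ?andbF //= andbF.
Qed.
End Gen.

Section Main.
Variables (V T : finType) (eH : rel V) (eG : rel T) (m : nat) (g : T -> {set V}).
Hypotheses (gcl : forall x, is_clique eH (g x)) (gcard : forall x, #|g x| = m.+1)
 (ginj : injective g)
 (gsurj : forall X, is_clique eH X -> #|X| = m.+1 -> exists x, g x = X)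
 (gadj : forall x y, eG x y = ts_adj eH (g x) (g y))
 (qge : m.+3 <= clique_number eG).

Lemma clique_le (S : {set T}) : is_clique eG S -> #|S| <= clique_number eG.
Proof. move=> cS; exact: (@leq_bigmax_cond _ (fun S => is_clique eG S) (fun S => #|S|) S cS). Qed.

Lemma exg (K : {set V}) x : K \subset g x -> #|K| = m -> exists2 u, u \notin K & g x = u |: K.
Proof. by move=> Kx cK; apply: ex_one; rewrite ?gcard ?cK. Qed.

Definition P (K U : {set V}) := [set x | (K \subset g x) && (g x \subset U)].

Lemma P_clique (K U : {set V}) : is_clique eH U -> #|K| = m -> is_clique eG (P K U).
Proof.
move=> cU cK; apply/forallP=> x; apply/implyP; rewrite inE => /andP[Kx xU].
apply/forallP=> y; apply/implyP; rewrite inE => /andP[Ky yU]; apply/implyP=> nxy.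
have [u uK gx] := exg Kx cK.
have [u' u'K gy] := exg Ky cK.
have nuu : u != u'.
  apply: contraNneq nxy => euu; apply/eqP/ginj; by rewrite gx gy euu.
have uU : u \in U by apply: (subsetP xU); rewrite gx; exact: setU11.
have u'U : u' \in U by apply: (subsetP yU); rewrite gy; exact: setU11.
rewrite gadj gx gy; apply: adj_one => //.
exact: (cliqueP cU).
Qed.

Lemma P_card (K U : {set V}) : is_clique eH U -> K \subset U -> #|K| = m -> #|P K U| = #|U :\: K|.
Proof.
move=> cU KU cK.
rewrite -(card_imset _ ginj).
have -> : g @: P K U = (fun u => u |: K) @: (U :\: K).
  apply/eqP; rewrite eqEsubset; apply/andP; split; apply/subsetP=> X.
  - case/imsetP=> x; rewrite inE => /andP[Kx xU] ->.
    have [u uK gx] := exg Kx cK.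
    rewrite gx; apply: imset_f; rewrite inE uK /=; apply: (subsetP xU); rewrite gx; exact: setU11.
  - case/imsetP=> u; rewrite inE => /andP[uK uU] ->.
    have [x gx] : exists x, g x = u |: K.
      apply: gsurj; first by apply: (clique_sub cU); rewrite subUset sub1set uU KU.
      by rewrite cardsU1 uK cK.
    rewrite -gx; apply: imset_f; rewrite inE gx subsetUr subUset sub1set uU KU.
    by [].
apply: card_in_imset => u u'; rewrite !inE => /andP[uK _] /andP[u'K _] e.
have : u \in u' |: K by rewrite -e setU11.
by rewrite !inE (negPf uK) orbF => /eqP.
Qed.

Lemma P_sub (K U U' : {set V}) : is_clique eH U -> #|K| = m -> K \subset U -> K \subset U' ->
  P K U \subset P K U' -> U \subset U'.
Proof.
move=> cU cK KU KU' sP; apply/subsetP=> u uU.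
case uK: (u \in K); first exact: (subsetP KU').
have [x gx] : exists x, g x = u |: K.
  apply: gsurj; first by apply: (clique_sub cU); rewrite subUset sub1set uU KU.
  by rewrite cardsU1 uK cK.
have : x \in P K U' by apply: (subsetP sP); rewrite inE gx subsetUr subUset sub1set uU KU.
rewrite inE gx => /andP[_ /subsetP]; apply; exact: setU11.
Qed.

Section AtV.
Variable v : T.
Local Notation A := (g v).

Definition Cs := [set U : {set V} | [&& is_clique eH U, A \subset U & #|U| == clique_number eG + m]].
Definition psi (p : V * {set V}) := P (A :\ p.1) p.2.

Lemma cardAa a : a \in A -> #|A :\ a| = m.
Proof. by move=> aA; have := cardsD1 a A; rewrite aA gcard add1n => -[]. Qed.

Lemma psi_in p : p \in setX A Cs -> psi p \in max_cliques_at eG v.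
Proof.
case: p => a U; rewrite !inE /= => /andP[aA /and3P[cU AU /eqP cUq]].
have KU : A :\ a \subset U by apply: subset_trans AU; apply: subD1set.
rewrite subD1set AU !andbT /is_kclique /psi /= P_clique ?cardAa //= P_card ?cardAa //.
by rewrite cardsD (setIidPr KU) cUq cardAa // addnK eqxx.
Qed.

Lemma psi_inj : {in setX A Cs &, injective psi}.
Proof.
case=> a U [b U']; rewrite !inE /= => /andP[aA /and3P[cU AU /eqP cUq]]
  /andP[bA /and3P[cU' AU' /eqP cU'q]]; rewrite /psi /= => e.
have KU : A :\ a \subset U by apply: subset_trans AU; apply: subD1set.
have KU' : A :\ b \subset U' by apply: subset_trans AU'; apply: subD1set.
have cP : #|P (A :\ a) U| = clique_number eG.
  by rewrite P_card ?cardAa // cardsD (setIidPr KU) cUq cardAa // addnK.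
case: (eqVneq a b) => [eab|nab]; last first.
  exfalso.
  have : P (A :\ a) U \subset [set v].
    apply/subsetP=> x xP; have := xP; rewrite {1}e !inE => /andP[Kbx _].
    move: xP; rewrite inE => /andP[Kax _].
    have Ax : A \subset g x.
      apply/subsetP=> z zA; case: (eqVneq z a) => [eza|nza].
        by apply: (subsetP Kbx); rewrite !inE zA andbT eza nab.
      by apply: (subsetP Kax); rewrite !inE zA nza.
    apply/eqP/ginj/esym/eqP; rewrite eqEcard Ax !gcard leqnn //.
  move/subset_leq_card; rewrite cards1 cP => h; move: qge; lia.
subst b; congr pair.
apply/eqP; rewrite eqEsubset; apply/andP; split.
  by apply: (P_sub (K := A :\ a) cU) => //; rewrite ?cardAa ?e.
by apply: (P_sub (K := A :\ a) cU') => //; rewrite ?cardAa ?e.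
Qed.


Lemma sunflower (S : {set T}) : is_clique eG S -> v \in S -> m.+3 <= #|S| ->
  exists2 a, a \in A & forall x, x \in S -> A :\ a \subset g x.
Proof.
move=> cS vS cSge.
have [y yS nyv] : exists2 y, y \in S & y != v.
  have := cardsD1 v S; rewrite vS add1n => hc.
  have : 0 < #|S :\ v| by move: cSge; rewrite hc; lia.
  by case/card_gt0P => y; rewrite !inE => /andP[nyv yS]; exists y.
have adjvy : ts_adj eH A (g y) by rewrite -gadj; apply: (cliqueP cS) => //; rewrite eq_sym.
case/existsP: adjvy => w /existsP[w' /and3P[/eqP hw /eqP hw' ew]].
set K := A :\ w.
have wA : w \in A by have := set11 w; rewrite -hw inE => /andP[].
have Kdef : forall z, (z \in K) = (z \in A) && (z \in g y).
  move=> z; rewrite !inE; move: (congr1 (fun X : {set V} => z \in X) hw); rewrite /= !inE.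
  by case: (z \in A); case: (z \in g y) => /= <-.
have KA : K \subset A := subD1set A w.
have Ky : K \subset g y by apply/subsetP=> z; rewrite Kdef => /andP[].
have cK : #|K| = m by apply: cardAa.
exists w => //.
case: (boolP [forall x in S, K \subset g x]) => [/forall_inP //|/forall_inPn [z zS nKz]].
exfalso.
set U0 := A :|: g y.
have AyK : A :&: g y = K by apply/setP=> z'; rewrite inE Kdef.
have cU0 : #|U0| = m.+2 by rewrite cardsU AyK cK !gcard; lia.
have bad : forall z, z \in S -> ~~ (K \subset g z) -> exists2 k, k \in K & g z = U0 :\ k.
  move=> z0 z0S /subsetPn [k kK kz].
  have kA : k \in A := subsetP KA k kK.
  have ky := subsetP Ky k kK.
  have nzv : z0 != v by apply: contraNneq kz => ->.
  have nzy : z0 != y by apply: contraNneq kz => ->.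
  have /existsP[p /existsP[p' /and3P[/eqP hp _ _]]] : ts_adj eH A (g z0).
    by rewrite -gadj; apply: (cliqueP cS) => //; rewrite eq_sym.
  have /existsP[r /existsP[r' /and3P[/eqP hr _ _]]] : ts_adj eH (g y) (g z0).
    by rewrite -gadj; apply: (cliqueP cS) => //; rewrite eq_sym.
  exists k => //.
  have kp : k \in A :\: g z0 by rewrite inE kz kA.
  rewrite hp inE in kp.
  have kr : k \in g y :\: g z0 by rewrite inE kz ky.
  rewrite hr inE in kr.
  have kU0 : k \in U0 by rewrite inE kA.
  apply/eqP; rewrite eq_sym eqEcard; apply/andP; split.
  - apply/subsetP=> u; rewrite !inE => /andP[nuk /orP[uA|uy]].
    + apply/negPn/negP => uz.
      have : u \in A :\: g z0 by rewrite inE uz uA.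
      rewrite hp inE => /eqP up.
      by rewrite (eqP kp) up eqxx in nuk.
    + apply/negPn/negP => uz.
      have : u \in g y :\: g z0 by rewrite inE uz uy.
      rewrite hr inE => /eqP up.
      by rewrite (eqP kr) up eqxx in nuk.
  - have := cardsD1 k U0; rewrite kU0 cU0 add1n => -[<-].
    by rewrite gcard.
have Aw : A = w |: K.
  apply: one_set => //; first by rewrite gcard cK.
  by rewrite !inE eqxx.
have [w0 w0K gyw] := exg Ky cK.
have good : forall x, x \in S -> K \subset g x -> (x == v) || (x == y).
  move=> x xS Kx; apply/negPn/negP; rewrite negb_or => /andP[nxv nxy].
  have [u uK gx] := exg Kx cK.
  have [k kK gz] := bad z zS nKz.
  have uA : u \notin A.
    apply: contra nxv => uA.
    have : u \in w |: K by rewrite -Aw.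
    rewrite in_setU1 (negPf uK) orbF => /eqP uw.
    by apply/eqP/ginj; rewrite gx uw -Aw.
  have uy : u \notin g y.
    apply: contra nxy => uy.
    have : u \in w0 |: K by rewrite -gyw.
    rewrite in_setU1 (negPf uK) orbF => /eqP uw.
    by apply/eqP/ginj; rewrite gx uw -gyw.
  have uz : u \notin g z by rewrite gz !inE (negPf uA) (negPf uy) andbF.
  have kx : k \in g x by rewrite gx in_setU1 kK orbT.
  have kz : k \notin g z by rewrite gz !inE eqxx.
  have nxz : x != z by apply: contraNneq kz => <-.
  have /existsP[p /existsP[p' /and3P[/eqP hp _ _]]] : ts_adj eH (g x) (g z).
    by rewrite -gadj; apply: (cliqueP cS).
  have : u \in g x :\: g z by rewrite inE uz gx setU11.
  rewrite hp inE => /eqP up.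
  have : k \in g x :\: g z by rewrite inE kz kx.
  rewrite hp inE => /eqP kp.
  by rewrite up -kp kK in uK.
have sub : S \subset [set v; y] :|: [set x | [exists k in K, g x == U0 :\ k]].
  apply/subsetP=> x xS; rewrite !inE.
  case: (boolP (K \subset g x)) => Kx.
  - by rewrite (good x xS Kx).
  - have [k kK gx] := bad x xS Kx.
    have -> : [exists k in K, g x == U0 :\ k] by apply/exists_inP; exists k; rewrite ?gx.
    by rewrite !orbT.
have cB : #|[set x | [exists k in K, g x == U0 :\ k]]| <= m.
  rewrite -cK -(card_imset _ ginj); apply: leq_trans (leq_imset_card (fun k => U0 :\ k) K).
  apply: subset_leq_card; apply/subsetP=> X /imsetP[x]; rewrite inE => /exists_inP[k kK /eqP gx] ->.
  by rewrite gx; apply: imset_f.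
have := subset_leq_card sub.
have := (leq_card_setU [set v; y] [set x | [exists k in K, g x == U0 :\ k]]).1.
rewrite cards2 => h1 h2.
have : #|S| <= 2 + m by apply: leq_trans h2 _; apply: leq_trans h1 _; apply: leq_add => //; case: (v != y).
move: cSge; lia.
Qed.


Lemma cover S : S \in max_cliques_at eG v -> S \in psi @: setX A Cs.
Proof.
rewrite inE => /andP[/andP[cS /eqP cSq] vS].
have [a aA KS] : exists2 a, a \in A & forall x, x \in S -> A :\ a \subset g x by apply: sunflower cS vS _; rewrite cSq.
have cK := cardAa aA.
set K := A :\ a in KS cK.
set U := \bigcup_(x in S) g x.
have xU : forall x, x \in S -> g x \subset U by move=> x xS; apply: bigcup_sup.
have cU : is_clique eH U.
  apply/forallP=> u; apply/implyP=> /bigcupP[y yS uy].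
  apply/forallP=> u'; apply/implyP=> /bigcupP[y' y'S u'y']; apply/implyP=> nuu.
  case uK: (u \in K).
    exact: (cliqueP (gcl y') (subsetP (KS y' y'S) u uK) u'y' nuu).
  case u'K: (u' \in K).
    exact: (cliqueP (gcl y) uy (subsetP (KS y yS) u' u'K) nuu).
  have gy : g y = u |: K by apply: one_set (KS y yS) _ uy _; rewrite ?gcard ?cK ?uK.
  have gy' : g y' = u' |: K by apply: one_set (KS y' y'S) _ u'y' _; rewrite ?gcard ?cK ?u'K.
  have nyy : y != y'.
    apply: contraNneq nuu => eyy.
    have : u \in g y' by rewrite -eyy.
    by rewrite gy' in_setU1 uK orbF.
  have /existsP[p /existsP[p' /and3P[/eqP hp /eqP hp' epp]]] : ts_adj eH (g y) (g y').
    by rewrite -gadj; apply: (cliqueP cS).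
  have : u \in g y :\: g y' by rewrite inE uy andbT gy' in_setU1 negb_or nuu uK.
  rewrite hp inE => /eqP ->.
  have : u' \in g y' :\: g y by rewrite inE u'y' andbT gy in_setU1 negb_or eq_sym nuu u'K.
  by rewrite hp' inE => /eqP ->.
have AU : A \subset U := xU v vS.
have KU : K \subset U := subset_trans (subD1set _ _) AU.
have SP : S = P K U.
  apply/eqP; rewrite eqEsubset; apply/andP; split.
    by apply/subsetP=> x xS; rewrite inE KS // xU.
  apply/subsetP=> x xP; apply/negPn/negP => nxS.
  have : is_clique eG (x |: S).
    apply: clique_sub (P_clique cU cK) _; rewrite subUset sub1set xP andTb.
    by apply/subsetP=> y yS; rewrite inE KS // xU.
  move/clique_le; rewrite cardsU1 nxS cSq add1n.
  by rewrite ltnn.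
have cUq : #|U| = clique_number eG + m.
  have := P_card cU KU cK; rewrite -SP cSq cardsD (setIidPr KU) cK.
  move: qge; lia.
apply/imsetP; exists (a, U); first by rewrite !inE aA cU AU cUq eqxx.
exact: SP.
Qed.

Lemma count : #|max_cliques_at eG v| = m.+1 * #|Cs|.
Proof.
have -> : max_cliques_at eG v = psi @: setX A Cs.
  apply/eqP; rewrite eqEsubset; apply/andP; split; apply/subsetP.
    by move=> S; apply: cover.
  by move=> S /imsetP[p pin ->]; apply: psi_in.
by rewrite (card_in_imset psi_inj) cardsX gcard.
Qed.

End AtV.

Lemma final t : (forall v, #|max_cliques_at eG v| = t) -> m.+1 %| t.
Proof.
move=> ht.
case: (set_0Vmem [set: T]) => [eT|[v _]].
  exfalso.
  have : clique_number eG = 0.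
    rewrite /clique_number big1 // => S _.
    apply/eqP; rewrite -leqn0.
    by have := subset_leq_card (subsetT S); rewrite eT cards0.
  by move=> h; move: qge; rewrite h.
by rewrite -(ht v) count dvdn_mulr.
Qed.

End Main.

Theorem proposition3p13 (V : finType) (eH : rel V) (T : finType) (eG : rel T)
    (j t : nat) :
  2 <= j ->
  simple_graph eH ->
  simple_graph eG ->
  iso_to_TS eG eH j ->
  j + 2 <= clique_number eG ->
  (forall v : T, #|max_cliques_at eG v| = t) ->
  j %| t.
Proof.
move=> hj _ _ iso hq ht.
case: j hj iso hq => [//|m] hj iso hq.
case: iso => f [fbij fadj].
pose g := fun x => val (f x).
have gcl : forall x, is_clique eH (g x) by move=> x; case/andP: (valP (f x)).
have gcard : forall x, #|g x| = m.+1 by move=> x; case/andP: (valP (f x)) => _ /eqP.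
have ginj : injective g by move=> x y /val_inj/(bij_inj fbij).
have gsurj : forall X, is_clique eH X -> #|X| = m.+1 -> exists x, g x = X.
  move=> X cX cXm.
  have XP : is_kclique eH m.+1 X by rewrite /is_kclique cX cXm eqxx.
  case: fbij => f' _ ff'.
  by exists (f' (exist _ X XP)); rewrite /g ff'.
have qge : m.+3 <= clique_number eG by rewrite addn2 in hq.
exact: (final gcl gcard ginj gsurj fadj qge ht).
Qed.
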